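(* EDHNN is a special case of the MultiSet framework: there is a choice of the MultiSet functions $f_{\mathcal{V}\to\mathcal{E}}, f_{\mathcal{E}\to\mathcal{V}}, f_{\mathcal{V}\to\mathcal{V}}$ such that the MultiSet scheme reproduces the hyperedge representations and the final node representations computed by EDHNN.
   Context: A hypergraph is $\mathcal{G}=(\mathcal{V},\mathcal{E})$ with each hyperedge $e\in\mathcal{E}$ a subset of $\mathcal{V}$; $\mathcal{E}_v=\{e\in\mathcal{E}:v\in e\}$ and $d_v=|\mathcal{E}_v|$. A function is called a multiset function if it is permutation invariant with respect to each of its (set-valued) arguments in turn. MultiSet framework: each hyperedge $e$ has a representation $\bm z_e^{(t)}\in\mathbb{R}^d$ at step $t$; each node $v$ has one representation $\bm x_{v,e}^{(t)}\in\mathbb{R}^f$ for each hyperedge $e\in\mathcal{E}_v$, and $\mathbb{X}_v^{(t)}=\{\bm x_{v,e}^{(t)}\}_{e\in\mathcal{E}_v}$. The updates are $$\bm z_e^{(t+1)}=f_{\mathcal{V}\to\mathcal{E}}\big(\{\mathbb{X}_u^{(t)}\}_{u\in e};\ \bm z_e^{(t)}\big),\qquad \bm x_{v,e}^{(t+1)}=f_{\mathcal{E}\to\mathcal{V}}\big(\{\bm z_{e}^{(t+1)}\}_{e\in\mathcal{E}_v};\ \{\mathbb{X}_v^{(k)}\}_{k=0}^{t}\big),$$ and after $T$ steps a readout $\bm x_v^{(T)}=f_{\mathcal{V}\to\mathcal{V}}\big(\{\mathbb{X}_v^{(k)}\}_{k=0}^{T}\big)$, where $f_{\mathcal{V}\to\mathcal{E}},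 f_{\mathcal{E}\to\mathcal{V}}$ are multiset functions with respect to their first input and $f_{\mathcal{V}\to\mathcal{V}}$ is a multiset function. EDHNN is the propagation scheme with a single representation $\bm x_v^{(t)}$ per node and updates $$\bm z_e^{(t+1)}=\sum_{u\in e}\hat\phi(\bm x_u^{(t)}),\qquad \bm x_v^{(t+1)}=\hat\psi\Big(\bm x_v^{(t)},\ \sum_{e\in\mathcal{E}_v}\hat\rho\big(\bm x_v^{(t)},\bm z_e^{(t+1)}\big),\ \bm x_v^{(0)},\ d_v\Big),$$ where $\hat\phi,\hat\psi,\hat\rho$ are MLPs shared across layers, and its output after $T$ steps is $\bm x_v^{(T)}$. *)

(* Defs.v *)
From HB Require Import structures.
From mathcomp Require Import all_boot all_order all_algebra.
Set Implicit Arguments. Unset Strict Implicit. Unset Printing Implicit Defensive.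
Import GRing.Theory.
Local Open Scope ring_scope.

(* A hypergraph is given by finite types V (nodes) and E (hyperedge labels)
   together with an incidence predicate inc : V -> E -> bool, where
   inc v e means v \in e.  Then E_v = [pred e | inc v e], d_v = #|E_v|. *)

Section EDHNN.
Variables (R : ringType) (V E : finType) (inc : V -> E -> bool) (f d h : nat).
Variable phi : 'rV[R]_f -> 'rV[R]_d.
Variable rho : 'rV[R]_f -> 'rV[R]_d -> 'rV[R]_h.
Variable psi : 'rV[R]_f -> 'rV[R]_h -> 'rV[R]_f -> nat -> 'rV[R]_f.
Variable x0 : V -> 'rV[R]_f.

Definition edhnn_zfrom (xt : V -> 'rV[R]_f) (e : E) : 'rV[R]_d :=
  \sum_(u | inc u e) phi (xt u).

Fixpoint edhnn_x (t : nat) : V -> 'rV[R]_f :=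
  match t with
  | 0 => x0
  | t'.+1 =>
      let xt := edhnn_x t' in
      fun v => psi (xt v)
                   (\sum_(e | inc v e) rho (xt v) (edhnn_zfrom xt e))
                   (x0 v) #|[pred e | inc v e]|
  end.

(* edhnn_z t e = z_e^(t+1) *)
Definition edhnn_z (t : nat) (e : E) : 'rV[R]_d := edhnn_zfrom (edhnn_x t) e.
End EDHNN.

(* Multisets are represented by finite sequences; a "multiset function" is a
   function on sequences that is invariant under permutations. *)

(* s and s' are equal as multisets of multisets: after permuting the outer
   sequence, corresponding inner sequences are permutations of each other. *)
Definition perm_nested (T : eqType) (s s' : seq (seq T)) : Prop :=
  exists2 t, perm_eq t s' & all2 (fun a b => perm_eq a b) s t.

Section MultiSetDefs.
Variables (R : ringType) (f d : nat).

(* f_{V->E}( {X_u}_{u in e} ; z_e ) : multiset function in its first input,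
   whose elements X_u are themselves multisets *)
Definition mset_fun_VE (fVE : seq (seq 'rV[R]_f) -> 'rV[R]_d -> 'rV[R]_d) : Prop :=
  forall s s' z, perm_nested s s' -> fVE s z = fVE s' z.

(* f_{E->V}( {z_e}_{e in E_v} ; {X_v^(k)}_{k=0..t} ) : multiset function in
   its first input (we additionally require invariance under permutation
   inside each X_v^(k)) *)
Definition mset_fun_EV (fEV : seq 'rV[R]_d -> seq (seq 'rV[R]_f) -> 'rV[R]_f) : Prop :=
  (forall zs zs' H, perm_eq zs zs' -> fEV zs H = fEV zs' H) /\
  (forall zs H H', all2 (fun a b => perm_eq a b) H H' -> fEV zs H = fEV zs H').

Definition mset_fun_VV (fVV : seq (seq 'rV[R]_f) -> 'rV[R]_f) : Prop :=
  forall H H', all2 (fun a b => perm_eq a b) H H' -> fVV H = fVV H'.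
End MultiSetDefs.

Section MultiSet.
Variables (R : ringType) (V E : finType) (inc : V -> E -> bool) (f d : nat).
Variable fVE : seq (seq 'rV[R]_f) -> 'rV[R]_d -> 'rV[R]_d.
Variable fEV : seq 'rV[R]_d -> seq (seq 'rV[R]_f) -> 'rV[R]_f.
Variable X0 : V -> E -> 'rV[R]_f.   (* x_{v,e}^(0) (used for inc v e) *)
Variable z0 : E -> 'rV[R]_d.

Definition mset (X : V -> E -> 'rV[R]_f) (v : V) : seq 'rV[R]_f :=
  [seq X v e | e <- enum E & inc v e].

Definition ms_zstep (X : V -> E -> 'rV[R]_f) (z : E -> 'rV[R]_d) (e : E) : 'rV[R]_d :=
  fVE [seq mset X u | u <- enum V & inc u e] (z e).

Definition ms_xstep (hist : seq (V -> E -> 'rV[R]_f)) (z' : E -> 'rV[R]_d)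
    (v : V) (_ : E) : 'rV[R]_f :=
  fEV [seq z' e' | e' <- enum E & inc v e'] [seq mset Xk v | Xk <- hist].

(* ms_run t = ([:: X^(0); ...; X^(t)], z^(t)) *)
Fixpoint ms_run (t : nat) : seq (V -> E -> 'rV[R]_f) * (E -> 'rV[R]_d) :=
  match t with
  | 0 => ([:: X0], z0)
  | t'.+1 =>
      let: (hist, z) := ms_run t' in
      let z' := ms_zstep (last X0 hist) z in
      (rcons hist (ms_xstep hist z'), z')
  end.

Definition ms_hist (t : nat) := (ms_run t).1.
Definition ms_z (t : nat) := (ms_run t).2.

Definition ms_out (fVV : seq (seq 'rV[R]_f) -> 'rV[R]_f) (T : nat) (v : V) : 'rV[R]_f :=
  fVV [seq mset Xk v | Xk <- ms_hist T].
End MultiSet.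

(* Main.v *)
Require Import Defs.
From HB Require Import structures.
From mathcomp Require Import all_boot all_order all_algebra.
Local Open Scope ring_scope.
Import GRing.Theory Num.Theory.

Set Implicit Arguments. Unset Strict Implicit.
Section Aux.
Variables (R : realFieldType) (n : nat).

Definition avg (X : seq 'rV[R]_n) : 'rV[R]_n :=
  (size X)%:R^-1 *: \sum_(x <- X) x.

Lemma avg_perm X Y : perm_eq X Y -> avg X = avg Y.
Proof. by move=> p; rewrite /avg (perm_size p) (perm_big _ p). Qed.

Lemma avg_nseq k c : (0 < k)%N -> avg (nseq k c) = c.
Proof.
move=> k0; rewrite /avg size_nseq big_nseq.
have -> : iter k (fun y => c + y) 0 = k%:R *: c.
  elim: k {k0} => [|k IH]; first by rewrite scale0r.
  by rewrite iterS IH !scaler_nat mulrS.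
by rewrite scalerA mulVf ?scale1r // pnatr_eq0 -lt0n.
Qed.

Lemma map_avg_all2 (H H' : seq (seq 'rV[R]_n)) :
  all2 (fun a b => perm_eq a b) H H' -> map avg H = map avg H'.
Proof.
elim: H H' => [|a H IH] [|b H'] //= /andP [p /IH ->].
by rewrite (avg_perm p).
Qed.
End Aux.

Lemma count_enum_card (E : finType) (p : pred E) : count p (enum E) = #|[pred e | p e]|.
Proof. by rewrite enumT cardE /enum_mem size_filter; apply: eq_count. Qed.

Lemma iota_rcons0 k : iota 0 k.+1 = rcons (iota 0 k) k.
Proof. by rewrite -addn1 iotaD cats1. Qed.

Theorem proposition3 (R : realFieldType) (f d h : nat)
    (phi : 'rV[R]_f -> 'rV[R]_d)
    (rho : 'rV[R]_f -> 'rV[R]_d -> 'rV[R]_h)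
    (psi : 'rV[R]_f -> 'rV[R]_h -> 'rV[R]_f -> nat -> 'rV[R]_f) :
  exists (fVE : seq (seq 'rV[R]_f) -> 'rV[R]_d -> 'rV[R]_d)
         (fEV : seq 'rV[R]_d -> seq (seq 'rV[R]_f) -> 'rV[R]_f)
         (fVV : seq (seq 'rV[R]_f) -> 'rV[R]_f),
    [/\ mset_fun_VE fVE, mset_fun_EV fEV, mset_fun_VV fVV &
    forall (V E : finType) (inc : V -> E -> bool),
      (forall v : V, exists e : E, inc v e) ->
      forall (x0 : V -> 'rV[R]_f) (z0 : E -> 'rV[R]_d),
        let X0 := fun (v : V) (_ : E) => x0 v in
        (forall (t : nat) (e : E),
            ms_z inc fVE fEV X0 z0 t.+1 e = edhnn_z inc phi rho psi x0 t e) /\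
        (forall (T : nat) (v : V),
            ms_out inc fVE fEV X0 z0 fVV T v = edhnn_x inc phi rho psi x0 T v)].
Proof.
pose fVE := fun (s : seq (seq 'rV[R]_f)) (_ : 'rV[R]_d) =>
  \sum_(X <- s) phi (avg X).
pose fEV := fun (zs : seq 'rV[R]_d) (H : seq (seq 'rV[R]_f)) =>
  let xt := last 0 (map (@avg R f) H) in
  psi xt (\sum_(z <- zs) rho xt z) (head 0 (map (@avg R f) H)) (size zs).
pose fVV := fun (H : seq (seq 'rV[R]_f)) => last 0 (map (@avg R f) H).
exists fVE, fEV, fVV; split.
- move=> s s' z [t pt a2]; rewrite /fVE -(perm_big _ pt).
  rewrite -(big_map (@avg R f) xpredT phi) -[in RHS](big_map (@avg R f) xpredT phi).
  by rewrite (map_avg_all2 a2).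
- split.
  + by move=> zs zs' H p; rewrite /fEV (perm_size p) (perm_big _ p).
  + by move=> zs H H' a2; rewrite /fEV (map_avg_all2 a2).
- by move=> H H' a2; rewrite /fVV (map_avg_all2 a2).
move=> V E inc incP x0 z0 X0.
pose nv v := count (inc v) (enum E).
have nv0 v : (0 < nv v)%N.
  by case: (incP v) => e He; rewrite /nv -has_count; apply/hasP; exists e; rewrite ?mem_enum.
have msetC (X : V -> E -> 'rV[R]_f) v c : (forall e, X v e = c) -> mset inc X v = nseq (nv v) c.
  move=> HX; rewrite /mset (eq_map HX) /nv -size_filter.
  elim: (filter _ _) => //= a s ->; by [].
pose ex := edhnn_x inc phi rho psi x0.
have runS t : ms_run inc fVE fEV X0 z0 t.+1 =
   (rcons (ms_hist inc fVE fEV X0 z0 t)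
      (ms_xstep inc fEV (ms_hist inc fVE fEV X0 z0 t)
         (ms_zstep inc fVE (last X0 (ms_hist inc fVE fEV X0 z0 t)) (ms_z inc fVE fEV X0 z0 t))),
    ms_zstep inc fVE (last X0 (ms_hist inc fVE fEV X0 z0 t)) (ms_z inc fVE fEV X0 z0 t)).
  by rewrite /ms_hist /ms_z /=; case: (ms_run _ _ _ _ _ t).
have histS t : ms_hist inc fVE fEV X0 z0 t.+1 =
   rcons (ms_hist inc fVE fEV X0 z0 t)
      (ms_xstep inc fEV (ms_hist inc fVE fEV X0 z0 t)
         (ms_zstep inc fVE (last X0 (ms_hist inc fVE fEV X0 z0 t)) (ms_z inc fVE fEV X0 z0 t))).
  by rewrite {1}/ms_hist runS.
have zstep t hist z e :
  (forall v, [seq mset inc Xk v | Xk <- hist] = [seq nseq (nv v) (ex k v) | k <- iota 0 t.+1]) ->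
  ms_zstep inc fVE (last X0 hist) z e = edhnn_z inc phi rho psi x0 t e.
  move=> Hh; rewrite /ms_zstep /fVE big_map big_filter big_enum_cond /edhnn_z /edhnn_zfrom /=.
  apply: eq_bigr => u _; congr phi.
  have := congr1 (last (mset inc X0 u)) (Hh u).
  rewrite (last_map (fun Xk => mset inc Xk u)) iota_rcons0 map_rcons last_rcons => ->.
  by rewrite avg_nseq.
have inv t : forall v, [seq mset inc Xk v | Xk <- ms_hist inc fVE fEV X0 z0 t]
                 = [seq nseq (nv v) (ex k v) | k <- iota 0 t.+1].
  elim: t => [|t IH] v.
    by rewrite /ms_hist /= (msetC X0 v (x0 v)).
  rewrite histS map_rcons IH [in RHS]iota_rcons0 map_rcons.
  congr rcons; apply: msetC => e.
  have Hav : [seq @avg R f i | i <- [seq mset inc Xk v | Xk <- ms_hist inc fVE fEV X0 z0 t]] = [seq ex k v | k <- iota 0 t.+1].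
    by rewrite IH -map_comp; apply: eq_map => k /=; rewrite avg_nseq.
  rewrite /ms_xstep /fEV Hav.
  have -> : head 0 [seq ex k v | k <- iota 0 t.+1] = x0 v by [].
  rewrite iota_rcons0 map_rcons last_rcons.
  rewrite big_map big_filter big_enum_cond size_map size_filter.
  congr psi.
    by apply: eq_bigr => e' _; congr rho; exact: zstep.
  exact: count_enum_card.
split.
- move=> t e; rewrite /ms_z runS /=; exact: zstep (inv t).
- move=> T v; rewrite /ms_out /fVV inv -map_comp.
  rewrite iota_rcons0 map_rcons last_rcons /= avg_nseq //.
Qed.
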